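(* Let $A$ be a finite direct product of elementary abelian groups, written additively, let $U$ be an $F$-relevant subgroup of $\mathrm{Aut}(A)$, and let $N(U) = N_{\mathrm{Aut}(A)}(U)$. For $\delta, \lambda \in Z^2(U,A)$ we have $G_\delta \cong G_\lambda$ if and only if there exists $g \in N(U)$ with $g([\delta]) = [\lambda]$ in $H^2(U,A)$.
   Context: $U$ acts on $A$ naturally (as a group of automorphisms), and $Z^2(U,A)$, $B^2(U,A)$, $H^2(U,A)=Z^2(U,A)/B^2(U,A)$ are the groups of $2$-cocycles, $2$-coboundaries and the second cohomology group for this action; $[\delta] = \delta + B^2(U,A)$. For $\delta\in Z^2(U,A)$, $G_\delta$ denotes the extension of $A$ by $U$ defined by $\delta$ (the group on the set $U\times A$ with multiplication twisted by $\delta$ in the standard way, containing $A$ as a normal subgroup with quotient $U$ acting on $A$ via the given action). The group $N(U)$ acts on $Z^2(U,A)$ by $(g(\delta))(u,v) = g\big(\delta(g^{-1}ug, g^{-1}vg)\big)$ for $g\in N(U)$, $u,v\in U$; this leaves $B^2(U,A)$ invariant and induces an action on $H^2(U,A)$ by $g([\delta]) = [g(\delta)]$. A subgroup $N \le \mathrm{Aut}(A)$ centralizes a series through $A$ if there is an $N$-invariant series $A = A_1 > \cdots > A_{l+1} = \{1\}$ with $N$ acting trivially on each $A_i/A_{i+1}$; $U\le\mathrm{Aut}(A)$ is $F$-relevant if no non-trivial normal subgroup of $U$ centralizes a series through $A$. *)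

(* Defs.v *)
From HB Require Import structures.
From mathcomp Require Import all_boot all_order all_fingroup all_solvable.
Set Implicit Arguments. Unset Strict Implicit. Unset Printing Implicit Defensive.

Local Open Scope group_scope.

Section Defs.
Variable gT : finGroupType.
Implicit Types (A : {set gT}) (U N : {set {perm gT}}) (u v w g : {perm gT}).

Definition dprod_elem_abelian (A : {group gT}) : Prop :=
  exists n (H : 'I_n -> {group gT}) (p : 'I_n -> nat),
    \big[dprod/1]_(i < n) H i = A /\ forall i, (p i).-abelem (H i).

(* Composition of automorphisms as functions: (compp u v) x = u (v x).
   (MathComp's permutation product u * v applies u first.) *)
Definition compp u v : {perm gT} := (v * u)%g.

(* N centralizes a series A = A_1 > ... > A_{l+1} = 1 through A:
   the series is A :: s, each step is a proper inclusion, every term is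
   N-invariant, and N acts trivially on each factor A_i / A_(i+1). *)
Definition centralizes_series N (A : {group gT}) : Prop :=
  exists s : seq {group gT},
    [/\ path (fun H K : {group gT} =>
                (K \proper H) &&
                [forall n in N, forall x in H, (n x \in H) && (n x * x^-1 \in K)])
             A s
      & (last A s : {set gT}) = 1].

Definition F_relevant (U : {group {perm gT}}) (A : {group gT}) : Prop :=
  forall N : {group {perm gT}}, N <| U -> centralizes_series N A -> N :=: 1.

Definition cocycle2 U A (d : {perm gT} -> {perm gT} -> gT) : Prop :=
  (forall u v, u \in U -> v \in U -> d u v \in A) /\
  (forall u v w, u \in U -> v \in U -> w \in U ->
     d u v * d (compp u v) w = u (d v w) * d u (compp v w)).

Definition coboundary2 U A (d : {perm gT} -> {perm gT} -> gT) : Prop :=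
  exists f : {perm gT} -> gT, (forall u, u \in U -> f u \in A) /\
    (forall u v, u \in U -> v \in U ->
       d u v = u (f v) * (f (compp u v))^-1 * f u).

Definition cohomologous U A (d l : {perm gT} -> {perm gT} -> gT) : Prop :=
  coboundary2 U A (fun u v => d u v * (l u v)^-1).

Definition gact2 g (d : {perm gT} -> {perm gT} -> gT) :=
  fun u v => g (d (compp (compp g^-1 u) g) (compp (compp g^-1 v) g)).

Definition ext_carrier U A : {set {perm gT} * gT} :=
  [set x | (x.1 \in U) && (x.2 \in A)].

Definition ext_mul (d : {perm gT} -> {perm gT} -> gT)
  (x y : {perm gT} * gT) : {perm gT} * gT :=
  (compp x.1 y.1, x.2 * x.1 y.2 * d x.1 y.1).

Definition ext_isomorphic U A (d l : {perm gT} -> {perm gT} -> gT) : Prop :=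
  exists f : {perm gT} * gT -> {perm gT} * gT,
    [/\ {in ext_carrier U A &, injective f},
        f @: ext_carrier U A = ext_carrier U A
      & {in ext_carrier U A &, forall x y,
           f (ext_mul d x y) = ext_mul l (f x) (f y)}].

End Defs.

(* Main.v *)
Require Import Defs.
From HB Require Import structures.
From mathcomp Require Import all_boot all_order all_fingroup all_solvable.
Set Implicit Arguments. Unset Strict Implicit. Unset Printing Implicit Defensive.

Local Open Scope group_scope.

Section Main.
Variables (gT : finGroupType) (A : {group gT}) (U : {group {perm gT}}).
Hypotheses (abA : abelian A) (sUA : U \subset Aut A).

Lemma cA x y : x \in A -> y \in A -> x * y = y * x.
Proof. by move=> Ax Ay; apply: (centsP abA). Qed.

Lemma UA u : u \in U -> u \in Aut A.
Proof. by move=> Uu; apply: (subsetP sUA). Qed.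

Lemma AutM u x y : u \in Aut A -> x \in A -> y \in A -> u (x * y) = u x * u y.
Proof. by move=> Au; apply: (morphicP (Aut_morphic Au)). Qed.

Lemma Aut1g u : u \in Aut A -> u 1 = 1.
Proof. by move=> Au; rewrite -(autmE Au) morph1. Qed.

Lemma AutV u x : u \in Aut A -> x \in A -> u x^-1 = (u x)^-1.
Proof. by move=> Au Ax; rewrite -(autmE Au) morphV. Qed.

Lemma comppE (u v : {perm gT}) : compp u v = v * u. Proof. by []. Qed.

Lemma coc_1l d u : cocycle2 U A d -> u \in U -> d 1 u = d 1 1.
Proof.
case=> dA dC Uu; have := dC 1 1 u (group1 _) (group1 _) Uu.
by rewrite !comppE !mulg1 perm1 => /mulIg.
Qed.

Lemma coc_1r d u : cocycle2 U A d -> u \in U -> d u 1 = u (d 1 1).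
Proof.
case=> dA dC Uu; have := dC u 1 1 Uu (group1 _) (group1 _).
by rewrite !comppE !mul1g => /mulIg.
Qed.


Lemma conj_back (u g : {perm gT}) : compp (compp g^-1 (u ^ g)) g = u.
Proof. by rewrite !comppE conjgE !mulgA mulgV mul1g mulgK. Qed.

Ltac inA := repeat first [ assumption | apply: groupM | apply: groupV | apply: group1
  | apply: Aut_closed; [solve [eauto using UA]|] ].

Lemma backward_dir d l g : cocycle2 U A d -> cocycle2 U A l ->
  g \in 'N_(Aut A)(U) -> cohomologous U A (gact2 g d) l -> ext_isomorphic U A d l.
Proof.
move=> [dA dC] [lA lC] /setIP[Ag Ng] [h [hA hE]].
pose F (x : {perm gT} * gT) := (x.1 ^ g, g x.2 * h (x.1 ^ g)).
have UJ u : u \in U -> u ^ g \in U by move=> Uu; rewrite memJ_norm.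
have Finj : {in ext_carrier U A &, injective F}.
  move=> [u a] [v b]; rewrite !inE /= => /andP[Uu Aa] /andP[Uv Ab] [e1 e2].
  have uv : u = v by apply: (conjg_inj g).
  subst v; congr (_, _); move: e2 => /mulIg; apply: perm_inj.
have FK x : x \in ext_carrier U A -> F x \in ext_carrier U A.
  case: x => u a; rewrite !inE /= => /andP[Uu Aa]; rewrite UJ //=.
  by rewrite groupM ?hA ?UJ ?Aut_closed.
exists F; split=> //.
  apply/eqP; rewrite eqEcard card_in_imset // leqnn andbT.
  by apply/subsetP=> _ /imsetP[x Kx ->]; apply: FK.
move=> [u a] [v b]; rewrite !inE /= => /andP[Uu Aa] /andP[Uv Ab].
rewrite /F /ext_mul /=; congr (_, _); first by rewrite !comppE conjMg.
set u' := u ^ g; set v' := v ^ g.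
have -> : compp u v ^ g = compp u' v' by rewrite !comppE conjMg.
have Au := UA Uu; have Av := UA Uv; have Au' := UA (UJ _ Uu); have Av' := UA (UJ _ Uv).
have UJM : compp u' v' \in U by rewrite comppE groupM ?UJ.
have hE' := hE u' v' (UJ _ Uu) (UJ _ Uv).
rewrite /gact2 /u' /v' !conj_back -/u' -/v' in hE'.
rewrite (AutM Ag) ?(AutM Ag) ?(AutM Au') ?groupM ?Aut_closed ?dA ?hA ?UJ //.
have ->: g (d u v) = u' (h v') * (h (compp u' v'))^-1 * h u' * l u' v'.
  by rewrite -hE' mulgKV.
rewrite /u' permJ -/u'.
set X := g a; set Y := g (u b); set H1 := h u'; set H2 := u' (h v');
set H3 := h (compp u' v'); set L := l u' v'.
have AX : X \in A by rewrite Aut_closed.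
have AY : Y \in A by rewrite !Aut_closed.
have A1 : H1 \in A by rewrite hA ?UJ.
have A2 : H2 \in A by rewrite Aut_closed ?hA ?UJ.
have A3 : H3 \in A by rewrite hA.
have AL : L \in A by rewrite lA ?UJ.
rewrite -!mulgA; congr (_ * _).
rewrite (cA AL A3) (mulgA H1 H3) (cA A1 A3) -mulgA mulKg.
by rewrite (mulgA H2 H1) (cA A2 A1) -mulgA (mulgA Y H1) (cA AY A1) -!mulgA.
Qed.


Lemma cs_two (N : {set {perm gT}}) (B : {group gT}) : B \subset A ->
  (forall n x, n \in N -> x \in A -> n x \in A /\ n x * x^-1 \in B) ->
  (forall n x, n \in N -> x \in B -> n x = x) -> centralizes_series N A.
Proof.
move=> sBA h1 h2.
have [A1 | nA1] := eqVneq (A : {set gT}) 1.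
  by exists [::]; split.
have pA : [1 gT] \proper A by rewrite proper1G.
have [B1 | nB1] := eqVneq (B : {set gT}) 1.
  exists [:: 1%G]; split=> //=; rewrite andbT pA /=.
  apply/forall_inP=> n Nn; apply/forall_inP=> x Ax.
  by have [-> ] := h1 n x Nn Ax; rewrite -B1.
have [BA | nBA] := eqVneq (B : {set gT}) A.
  exists [:: 1%G]; split=> //=; rewrite andbT pA /=.
  apply/forall_inP=> n Nn; apply/forall_inP=> x Ax.
  have Bx : x \in B by rewrite BA.
  by rewrite (h2 n x Nn Bx) Ax mulgV group1.
exists [:: B; 1%G]; split=> //=; rewrite andbT.
apply/andP; split.
  rewrite properEneq nBA sBA /=.
  apply/forall_inP=> n Nn; apply/forall_inP=> x Ax.
  by have [-> ->] := h1 n x Nn Ax.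
rewrite proper1G nB1 /=.
apply/forall_inP=> n Nn; apply/forall_inP=> x Bx.
by rewrite (h2 n x Nn Bx) Bx mulgV group1.
Qed.


Lemma forward_dir d l : cocycle2 U A d -> cocycle2 U A l -> F_relevant U A ->
  ext_isomorphic U A d l ->
  exists2 g, g \in 'N_(Aut A)(U) & cohomologous U A (gact2 g d) l.
Proof.
move=> dc lc FR [f [finj fim fM]].
have [dA dC] := dc; have [lA lC] := lc.
set K := ext_carrier U A.
have inK u a : ((u, a) \in K) = (u \in U) && (a \in A) by rewrite inE.
have fK x : x \in K -> f x \in K by move=> Kx; rewrite /K -fim imset_f.
have fsurj y : y \in K -> exists2 x, x \in K & y = f x.
  by move=> Ky; apply/imsetP; rewrite fim.
have phiU x : x \in K -> (f x).1 \in U by move/fK; rewrite inE => /andP[].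
have psiA x : x \in K -> (f x).2 \in A by move/fK; rewrite inE => /andP[].
have U1 := group1 U; have A1 := group1 A.
set d11 := d 1 1; set l11 := l 1 1.
have Ad11 : d11 \in A by apply: dA.
have Al11 : l11 \in A by apply: lA.
have l1r w : w \in U -> l w 1 = w l11 by move=> Uw; rewrite (coc_1r lc Uw).
have d1r w : w \in U -> d w 1 = w d11 by move=> Uw; rewrite (coc_1r dc Uw).
have l1l w : w \in U -> l 1 w = l11 by move=> Uw; rewrite (coc_1l lc Uw).
have d1l w : w \in U -> d 1 w = d11 by move=> Uw; rewrite (coc_1l dc Uw).
have K1 a : a \in A -> (1, a) \in K by move=> Aa; rewrite inK U1.
have L1 y s : y \in K -> s \in A ->
    exists2 s', s' \in A & ext_mul d y (1, s) = ext_mul d (1, s') y.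
  case: y => w c; rewrite inK => /andP[Uw Ac] As.
  exists ((c * w s * d w 1) * (c * d 1 w)^-1).
    by rewrite !(groupM, groupV) ?dA ?Aut_closed ?(UA Uw).
  by rewrite /ext_mul /= ?comppE mulg1 mul1g perm1 -[in RHS]mulgA mulgKV.
pose M := [set (f (1, a)).1 | a in A].
have M1 : (f (1, d11^-1)).1 = 1.
  have Ke : (1, d11^-1) \in K by rewrite K1 ?groupV.
  have := fM _ _ Ke Ke.
  rewrite {1}/ext_mul /= comppE mulg1 perm1 mulgKV.
  move/(congr1 fst); rewrite /ext_mul /= comppE => e.
  by have := congr1 (mulg ((f (1, d11^-1)).1)^-1) e; rewrite mulKg mulVg.
have gsM : group_set M.
  apply/group_setP; split.
    by apply/imsetP; exists d11^-1; rewrite ?groupV // M1.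
  move=> _ _ /imsetP[a Aa ->] /imsetP[b Ab ->].
  have e : ext_mul d (1, b) (1, a) = (1, b * a * d11).
    by rewrite /ext_mul /= comppE mulg1 perm1.
  apply/imsetP; exists (b * a * d11); first by rewrite !groupM.
  by rewrite -e fM ?K1 //= comppE.
pose MG := Group gsM.
have MU : MG \subset U.
  by apply/subsetP=> _ /imsetP[a Aa ->]; apply: phiU; rewrite K1.
have nMU : MG <| U.
  rewrite /normal MU; apply/subsetP=> v Uv; rewrite inE.
  apply/subsetP=> _ /imsetP[_ /imsetP[a Aa ->] ->].
  have Kv1 : (v, 1) \in K by rewrite inK Uv A1.
  have [x Kx ex] := fsurj (v, 1) Kv1.
  have [s' As' es] := L1 x a Kx Aa.
  have := congr1 (fun z => (f z).1) es; rewrite /= !fM ?K1 // /ext_mul /= -ex /=.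
  rewrite !comppE => e; apply/imsetP; exists s' => //.
  by rewrite conjgE e mulKg.
have core s t x : s \in A -> t \in A -> x \in A ->
    (f (1, t)).1 ((f (1, s)).1 x * x^-1) = (f (1, s)).1 x * x^-1.
  move=> As At Ax.
  have Un : (f (1, s)).1 \in U by apply: phiU; rewrite K1.
  have Um : (f (1, t)).1 \in U by apply: phiU; rewrite K1.
  have Ab : (f (1, s)).2 \in A by apply: psiA; rewrite K1.
  have Ac : (f (1, t)).2 \in A by apply: psiA; rewrite K1.
  set n := (f (1, s)).1 in Un *; set m := (f (1, t)).1 in Um *.
  set b := (f (1, s)).2 in Ab *; set c := (f (1, t)).2 in Ac *.
  have An := UA Un; have Am := UA Um.
  set a := x * l11^-1.
  have Aa : a \in A by rewrite groupM ?groupV.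
  have [y Ky ey] := fsurj (1, a) (K1 a Aa).
  have [s' As' es] := L1 y s Ky As.
  have Ab' : (f (1, s')).2 \in A by apply: psiA; rewrite K1.
  have := congr1 f es; rewrite !fM ?K1 // -ey /ext_mul /= -/n -/b.
  set b' := (f (1, s')).2 in Ab' *; case=> e1 e2.
  have e1' : (f (1, s')).1 = n by move: e1; rewrite !comppE mulg1 mul1g.
  have ec : ext_mul d (1, t) (1, s) = ext_mul d (1, s) (1, t).
    by rewrite /ext_mul /= !perm1 (cA At As).
  have := congr1 f ec; rewrite !fM ?K1 // /ext_mul /= -/n -/m -/b -/c.
  case=> _ e3.
  have ec' : ext_mul d (1, t) (1, s') = ext_mul d (1, s') (1, t).
    by rewrite /ext_mul /= !perm1 (cA At As').
  have := congr1 f ec'; rewrite !fM ?K1 // /ext_mul /= -/m -/c -/b' e1'.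
  case=> _ e4.
  rewrite e1' in e2.
  have e5 : m b * (m b')^-1 = b * b'^-1.
    have := congr2 (fun p q => p * q^-1) e3 e4; rewrite /= !invMg !mulgA !mulgK.
    rewrite -(mulgA c) (cA Ac) ?mulgK //.
    by rewrite groupM ?groupV ?Aut_closed.
  have e6 : b * b'^-1 = n x * x^-1.
    move: e2; rewrite perm1 (coc_1l lc Un) (coc_1r lc Un) => e2.
    rewrite -[b' * _ * _]mulgA -(AutM An) // (cA Aa Ab) -mulgA /a mulgKV in e2.
    rewrite (cA Ab (groupVr Ab')).
    by apply: (canRL (mulgK x)); rewrite -mulgA e2 mulKg.
  by rewrite -e6 (AutM Am) ?groupV // (AutV Am).
pose Bset := [set x in A | [forall m in M, m x == x]].
have MAut m : m \in M -> m \in Aut A by move=> Mm; apply/UA/(subsetP MU).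
have gsB : group_set Bset.
  apply/group_setP; split.
    by rewrite inE A1; apply/forall_inP=> m Mm; rewrite Aut1g ?MAut.
  move=> x y; rewrite !inE => /andP[Ax fx] /andP[Ay fy]; rewrite groupM //.
  apply/forall_inP=> m Mm; rewrite AutM ?MAut //.
  by rewrite (eqP (forall_inP fx m Mm)) (eqP (forall_inP fy m Mm)).
pose BG := Group gsB.
have cs : centralizes_series MG A.
  apply: (@cs_two MG BG).
  - by apply/subsetP=> x; rewrite inE => /andP[].
  - move=> n x Mn Ax; split; first by rewrite Aut_closed ?MAut.
    rewrite inE groupM ?groupV ?Aut_closed ?MAut //=.
    apply/forall_inP=> m Mm; apply/eqP.
    case/imsetP: Mn => s As ->; case/imsetP: Mm => t At ->.
    exact: core.
  - by move=> n x Mn; rewrite inE => /andP[_ fx]; apply/eqP/(forall_inP fx).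
have MG1 := FR MG nMU cs.
have phi1 a : a \in A -> (f (1, a)).1 = 1.
  move=> Aa; have : (f (1, a)).1 \in MG by apply: imset_f.
  by rewrite MG1 => /set1P.
pose a0 a := (f (1, a * d11^-1)).2 * l11.
have Kd a : a \in A -> (1, a * d11^-1) \in K by move=> Aa; rewrite K1 ?groupM ?groupV.
have fpair a : a \in A -> f (1, a * d11^-1) = (1, a0 a * l11^-1).
  move=> Aa; apply: injective_projections => /=.
    by apply: phi1; rewrite groupM ?groupV.
  by rewrite /a0 mulgK.
have a0A a : a \in A -> a0 a \in A by move=> Aa; rewrite groupM ?psiA ?Kd.
have a0M a b : a \in A -> b \in A -> a0 (a * b) = a0 a * a0 b.
  move=> Aa Ab.
  have e : ext_mul d (1, a * d11^-1) (1, b * d11^-1) = (1, (a * b) * d11^-1).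
    rewrite /ext_mul /= comppE mulg1 perm1; congr (_, _).
    by rewrite mulgA mulgKV -mulgA (cA (groupVr Ad11) Ab) mulgA.
  have := congr1 f e; rewrite fM ?Kd // !fpair ?groupM // /ext_mul /= perm1.
  case=> _ e'; apply: (mulIg l11^-1); rewrite -e'.
  by rewrite mulgA mulgKV -mulgA (cA (groupVr Al11) (a0A _ Ab)) mulgA.
have a0inj : {in A &, injective a0}.
  move=> a b Aa Ab e.
  have : f (1, a * d11^-1) = f (1, b * d11^-1) by rewrite !fpair // e.
  by move/finj => /(_ (Kd _ Aa) (Kd _ Ab)) [/mulIg].
have a0sub : a0 @: A \subset A.
  by apply/subsetP=> _ /imsetP[a Aa ->]; apply: a0A.
pose al := perm_in a0inj a0sub.
have alE : {in A, al =1 a0} := perm_inE a0inj a0sub.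
have Aal : al \in Aut A.
  rewrite inE perm_in_on /=; apply/morphicP=> x y Ax Ay.
  by rewrite !alE ?groupM // a0M.
have KU u c : u \in U -> c \in A -> (u, c) \in K by move=> Uu Ac; rewrite inK Uu Ac.
have fu u c : u \in U -> c \in A -> f (u, c) = ((f (u, 1)).1, a0 c * (f (u, 1)).2).
  move=> Uu Ac.
  have e : ext_mul d (1, c * d11^-1) (u, 1) = (u, c).
    by rewrite /ext_mul /= comppE mulg1 perm1 mulg1 (coc_1l dc Uu) mulgKV.
  have Kf : (f (u, 1)) \in K by apply: fK; apply: KU.
  rewrite -{1}e fM ?Kd ?KU // fpair // /ext_mul /= comppE mulg1 perm1.
  rewrite (coc_1l lc (phiU _ (KU _ _ Uu A1))); congr (_, _).
  by rewrite -!mulgA (cA (psiA _ (KU _ _ Uu A1)) Al11) mulKg.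
have conj u a : u \in U -> a \in A -> (f (u, 1)).1 (a0 a) = a0 (u a).
  move=> Uu Aa; have Au := UA Uu.
  have Ub := phiU _ (KU _ _ Uu A1); have Ab := UA Ub.
  have Ap := psiA _ (KU _ _ Uu A1).
  have e : ext_mul d (u, 1) (1, a * d11^-1) = (u, u a).
    rewrite /ext_mul /= comppE !mul1g (coc_1r dc Uu) -(AutM Au (groupM Aa (groupVr Ad11)) Ad11).
    by rewrite mulgKV.
  have := congr1 f e; rewrite (fM _ _ (KU _ _ Uu A1) (Kd _ Aa)) (fpair a Aa).
  rewrite (fu u (u a) Uu (Aut_closed Au Aa)).
  rewrite /ext_mul /= (l1r _ Ub) -mulgA.
  rewrite -(AutM Ab (groupM (a0A _ Aa) (groupVr Al11)) Al11).
  have E : a0 a * l11^-1 * l11 = a0 a by rewrite mulgKV.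
  rewrite E; case=> _ e'; apply: (mulgI (f (u, 1)).2); rewrite e'.
  by rewrite (cA (a0A _ (Aut_closed Au Aa)) Ap).
have beta u : u \in U -> (f (u, 1)).1 = u ^ al.
  move=> Uu; have Ub := phiU _ (KU _ _ Uu A1).
  apply: (eq_Aut (UA Ub) (groupJ (UA Uu) Aal)) => x Ax.
  have Ay : al^-1 x \in A by apply: Aut_closed; rewrite ?groupV.
  rewrite -(permKV al x) permJ (alE _ Ay) (alE _ (Aut_closed (UA Uu) Ay)).
  exact: conj.
have Nal : al \in 'N_(Aut A)(U).
  rewrite inE Aal inE; apply/subsetP=> _ /imsetP[u Uu ->].
  by rewrite -beta // phiU // KU.
exists al => //.
have cb w : compp (compp al^-1 w) al = w ^ al^-1 by rewrite !comppE conjgE invgK.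
have NU : al^-1 \in 'N(U) by rewrite groupV; case/setIP: Nal.
exists (fun w => (f (compp (compp al^-1 w) al, 1)).2); split.
  by move=> w Uw; apply: psiA; rewrite cb KU ?memJ_norm.
move=> u' v' Uu' Uv'; rewrite /gact2 !cb.
have Uu : u' ^ al^-1 \in U by rewrite memJ_norm.
have Uv : v' ^ al^-1 \in U by rewrite memJ_norm.
have -> : compp u' v' ^ al^-1 = compp (u' ^ al^-1) (v' ^ al^-1).
  by rewrite !comppE conjMg.
set u := u' ^ al^-1 in Uu *; set v := v' ^ al^-1 in Uv *.
have bu : (f (u, 1)).1 = u' by rewrite beta // conjgKV.
have bv : (f (v, 1)).1 = v' by rewrite beta // conjgKV.
have Uuv : compp u v \in U by rewrite comppE groupM.
have e : ext_mul d (u, 1) (v, 1) = (compp u v, d u v).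
  by rewrite /ext_mul /= Aut1g ?UA // !mul1g.
have := congr1 f e.
rewrite (fM _ _ (KU _ _ Uu A1) (KU _ _ Uv A1)) (fu _ _ Uuv (dA _ _ Uu Uv)).
rewrite /ext_mul /= bu bv.
case=> _ e'.
have Au := psiA _ (KU _ _ Uu A1); have Av := psiA _ (KU _ _ Uv A1).
have Auv := psiA _ (KU _ _ Uuv A1).
set pu := (f (u, 1)).2 in Au e' *; set pv := (f (v, 1)).2 in Av e' *.
set puv := (f (compp u v, 1)).2 in Auv e' *.
have AL : l u' v' \in A by apply: lA.
have Apv : u' pv \in A by rewrite Aut_closed ?UA.
rewrite alE ?dA //.
have -> : a0 (d u v) = pu * u' pv * l u' v' * puv^-1 by rewrite e' mulgK.
rewrite -mulgA (cA (groupVr Auv) (groupVr AL)) mulgA mulgK.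
by rewrite -mulgA (cA Au) ?groupM ?groupV // mulgA.
Qed.

End Main.

Theorem theorem3p5 (gT : finGroupType) (A : {group gT})
    (U : {group {perm gT}})
    (d l : {perm gT} -> {perm gT} -> gT) :
  abelian A -> dprod_elem_abelian A ->
  U \subset Aut A -> F_relevant U A ->
  cocycle2 U A d -> cocycle2 U A l ->
  ext_isomorphic U A d l <->
  exists2 g, g \in 'N_(Aut A)(U) & cohomologous U A (gact2 g d) l.
Proof.
move=> abA _ sUA FR dc lc; split.
  by move=> iso; apply: (forward_dir abA sUA dc lc FR iso).
by case=> g Ng coh; apply: (backward_dir abA sUA dc lc Ng coh).
Qed.
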